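(* Let $H(\mathbb C)$ be the space of entire functions with the topology of locally uniform convergence, identified with the space of sequences $(x(n))_{n\ge0}$ of Taylor coefficients at $0$ and endowed with the Hadamard (coordinatewise) product, and let $D:f\mapsto f'$ be the differentiation operator, i.e. $D(x(0),x(1),x(2),\ldots)=(x(1),2x(2),3x(3),\ldots)$. If $x$ is a frequently hypercyclic vector for $D$, then there exists a natural number $M$ such that $x^m$ is not hypercyclic for $D$ for any $m\ge M$. In particular, $D$ does not have any frequently hypercyclic algebra.
   Context: A vector $x$ is hypercyclic for $T$ if its orbit $\{T^nx:n\ge0\}$ is dense; frequently hypercyclic if for every non-empty open $U$ the set $\{n\in\mathbb N_0:T^nx\in U\}$ has positive lower density $\liminf_{N\to\infty}\frac{\mathrm{card}(A\cap[0,N])}{N+1}$. Powers $x^m$ are taken for the Hadamard product. A frequently hypercyclic algebra is a subalgebra $\ne\{0\}$ all of whose non-zero elements are frequently hypercyclic. *)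

(* Defs.v *)
From HB Require Import structures.
From mathcomp Require Import all_boot all_order all_algebra.
From mathcomp Require Import all_classical all_reals all_analysis.
From mathcomp Require Import complex.
Set Implicit Arguments. Unset Strict Implicit. Unset Printing Implicit Defensive.
Import Order.TTheory GRing.Theory Num.Theory.
Import numFieldNormedType.Exports.
Local Open Scope ring_scope.
Local Open Scope complex_scope.

Section EntireSeq.
Variable R : realType.
Local Notation C := ((R[i])^o).

(* An entire function, identified with its sequence of Taylor coefficients at 0:
   the power series converges at every point of C (infinite radius). *)
Definition entire (x : nat -> C) : Prop :=
  forall z : C, cvgn (series (fun k => x k * z ^+ k)).

Definition evalp (x : nat -> C) (z : C) : C :=
  limn (series (fun k => x k * z ^+ k)).

Definition Dop (x : nat -> C) : nat -> C := fun k => x k.+1 *+ k.+1.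

Definition hpow (x : nat -> C) (m : nat) : nat -> C := fun k => x k ^+ m.

(* basic neighbourhood of y for locally uniform convergence:
   u is in N(y, r, eps) iff |u(z) - y(z)| < eps for all |z| <= r *)
Definition in_nbhd (y : nat -> C) (r eps : R) (u : nat -> C) : Prop :=
  forall z : C, `|z| <= r%:C -> `|evalp u z - evalp y z| < eps%:C.

Definition visits (x y : nat -> C) (r eps : R) (n : nat) : Prop :=
  in_nbhd y r eps (iter n Dop x).

(* hypercyclic for D: the orbit meets every non-empty open set of H(C), i.e.
   every basic neighbourhood of every entire function *)
Definition hypercyclic (x : nat -> C) : Prop :=
  forall y : nat -> C, entire y -> forall r eps : R, 0 < r -> 0 < eps ->
    exists n : nat, visits x y r eps n.

Definition pos_lower_density (A : nat -> Prop) : Prop :=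
  exists c : R, 0 < c /\ exists N0 : nat, forall N : nat, (N0 <= N)%N ->
    c <= (\sum_(n < N.+1) (`[< A n >] : nat)%:R) / N.+1%:R.

Definition freq_hypercyclic (x : nat -> C) : Prop :=
  forall y : nat -> C, entire y -> forall r eps : R, 0 < r -> 0 < eps ->
    pos_lower_density (visits x y r eps).

Definition freq_hypercyclic_algebra (S : set (nat -> C)) : Prop :=
  (forall x, S x -> entire x) /\
  S (fun _ => 0) /\
  (forall x y, S x -> S y -> S (fun k => x k + y k)) /\
  (forall (c : C) x, S x -> S (fun k => c * x k)) /\
  (forall x y, S x -> S y -> S (fun k => x k * y k)) /\
  (exists x, S x /\ x <> (fun _ => 0)) /\
  (forall x, S x -> x <> (fun _ => 0) -> freq_hypercyclic x).

End EntireSeq.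

(* Main.v *)
Require Import Defs.
From HB Require Import structures.
From mathcomp Require Import all_boot all_order all_algebra.
From mathcomp Require Import all_classical all_reals all_analysis.
From mathcomp Require Import complex.
From mathcomp Require Import ring lra zify.
Import Order.TTheory GRing.Theory Num.Theory.
Import numFieldNormedType.Exports.
Local Open Scope ring_scope.
Local Open Scope complex_scope.
Lemma series0_eq {R : realType} (u : nat -> (R[i])^o) N : (0 < N)%N ->
  series (fun k => u k * 0 ^+ k) N = u 0%N.
Proof.
case: N => // N _; rewrite /series /= big_nat_recl // expr0 mulr1 big1 ?addr0 //.
by move=> i _; rewrite expr0n /= mulr0.
Qed.

Lemma evalp0 {R : realType} (u : nat -> (R[i])^o) : evalp u 0 = u 0%N.
Proof.
rewrite /evalp; apply: lim_near_cst; first exact: norm_hausdorff.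
near=> N; apply: series0_eq; near: N; exact: nbhs_infty_gt.
Unshelve. all: by end_near.
Qed.

Lemma iterD_fact {R : realType} (u : nat -> (R[i])^o) n k :
  (iter n (@Dop R) u) k *+ k`! = u (n + k)%N *+ (n + k)`!.
Proof.
elim: n k => [|n IH] k; first by [].
rewrite iterS {1}/Dop -mulrnA -factS IH addSnnS.
by [].
Qed.

Lemma normC_real {R : realType} (r : R) : `|r%:C| = `|r|%:C.
Proof. by rewrite normc_def /= expr0n /= addr0 sqrtr_sqr. Qed.
Lemma normCE {R : realType} (z : R[i]) : `|z| = (Normc.normc z)%:C.
Proof. by rewrite normc_def; case: z. Qed.

Lemma normci {R : realType} : Normc.normc ('i : R[i]) = 1.
Proof. rewrite /Normc.normc /= expr0n /= add0r expr1n sqrtr1 //. Qed.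

Lemma normc_ge0 {R : realType} (z : R[i]) : 0 <= Normc.normc z.
Proof. by have := normr_ge0 z; rewrite normCE ler0c. Qed.

Lemma normc_Re {R : realType} (z : R[i]) : `|complex.Re z| <= Normc.normc z.
Proof. by have := normc_ge_Re z; rewrite normCE lecR. Qed.

Lemma normc_Im {R : realType} (z : R[i]) : `|complex.Im z| <= Normc.normc z.
Proof.
have := @normc_Re R (z * 'i)%C; rewrite ReiNIm normrN Normc.normcM normci mulr1 //.
Qed.

Definition gbound {R : realType} (u : nat -> R[i]) : Prop :=
  forall rho : R, 0 < rho -> exists B : R, forall l, Normc.normc (u l) * rho ^+ l <= B.

Lemma gbound_D {R : realType} (u : nat -> (R[i])^o) : gbound u -> gbound (@Dop R u).
Proof.
move=> gu rho rho0; have [B hB] := gu (2 * rho) ltac:(by rewrite mulr_gt0).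
exists (B / rho) => l; rewrite /Dop normcMn ler_pdivlMr //.
apply: le_trans (hB l.+1).
have h2 : (l.+1%:R : R) <= 2 ^+ l.+1.
  by rewrite -natrX ler_nat ltnW // ltn_expl.
have a0 := @normc_ge0 R (u l.+1).
have p0 : 0 <= rho ^+ l by rewrite exprn_ge0 // ltW.
have := mulr_ge0 (mulr_ge0 a0 p0) (ltW rho0).
rewrite exprMn (exprSr rho l) -mulr_natr.
rewrite ?mul1r; set a := Normc.normc _; set p := rho ^+ l.
move=> h; nra.
Qed.

Lemma entire_gbound {R : realType} (x : nat -> (R[i])^o) : entire x -> gbound x.
Proof.
move=> ex rho rho0.
have c0 := cvg_series_cvg_0 (ex rho%:C).
have [M [Mreal HM]] := cvg_seq_bounded (cvgP _ c0).
have hM1 : M < M + 1 by rewrite ltrDl ltr01.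
have hr : M + 1 \is Num.real by rewrite realD // real1.
have hl := HM (M + 1) hM1.
exists (complex.Re (M + 1)) => l.
have /= := hl l I.
rewrite normrM normrX normC_real (ger0_norm (ltW rho0)) normCE -rmorphXn -rmorphM.
by rewrite -{1}(RRe_real hr) lecR.
Qed.

Lemma ReD {R : realType} (x y : R[i]) : complex.Re (x + y) = complex.Re x + complex.Re y.
Proof. by case: x; case: y. Qed.
Lemma ImD {R : realType} (x y : R[i]) : complex.Im (x + y) = complex.Im x + complex.Im y.
Proof. by case: x; case: y. Qed.

Lemma Re_series {R : realType} (v : nat -> (R[i])^o) n :
  complex.Re (series v n) = series (fun k => complex.Re (v k)) n.
Proof.
elim: n => [|n IH]; first by rewrite /series /= !big_geq.
by rewrite !seriesSr ReD IH.
Qed.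
Lemma Im_series {R : realType} (v : nat -> (R[i])^o) n :
  complex.Im (series v n) = series (fun k => complex.Im (v k)) n.
Proof.
elim: n => [|n IH]; first by rewrite /series /= !big_geq.
by rewrite !seriesSr ImD IH.
Qed.

Lemma real_series_dom {R : realType} (a : nat -> R) (B : R) :
  (forall k, `|a k| <= B * (2^-1) ^+ k) -> cvgn (series a).
Proof.
move=> ha.
have B0 : 0 <= B by have := ha 0%N; rewrite expr0 mulr1; apply: le_trans.
have geo : cvgn (series (geometric B (2^-1 : R))).
  apply: is_cvg_geometric_series; rewrite ger0_norm ?invr_ge0 ?ler0n //.
  by rewrite invf_lt1 // ltr1n.
apply: normed_cvg.
apply: (series_le_cvg _ _ _ geo) => k /=.
- exact: normr_ge0.
- by rewrite mulr_ge0 // exprn_ge0 // invr_ge0 ler0n.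
- exact: ha.
Qed.

Lemma cvg_dom {R : realType} (v : nat -> (R[i])^o) (B : R) :
  (forall k, Normc.normc (v k) <= B * (2^-1) ^+ k) -> cvgn (series v).
Proof.
move=> hv.
have cre : cvgn (series (fun k => complex.Re (v k))).
  by apply: (@real_series_dom R _ B) => k; apply: le_trans (hv k); apply: normc_Re.
have cim : cvgn (series (fun k => complex.Im (v k))).
  by apply: (@real_series_dom R _ B) => k; apply: le_trans (hv k); apply: normc_Im.
set a := limn _ in cre; set b := limn _ in cim.
apply/cvg_ex; exists ((a%:C + 'i * b%:C)%C : (R[i])^o).
apply/cvgrPdist_lt => e e0.
have er : e \is Num.real by apply: gtr0_real.
have e'0 : 0 < complex.Re e by rewrite -ltcR RRe_real.
have e2 : 0 < complex.Re e / 2 by rewrite divr_gt0.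
near=> n.
have h1 : `|a - series (fun k => complex.Re (v k)) n| < complex.Re e / 2.
  by near: n; apply: cvgr_dist_lt.
have h2 : `|b - series (fun k => complex.Im (v k)) n| < complex.Re e / 2.
  by near: n; apply: cvgr_dist_lt.
rewrite [series v n]complexE Re_series Im_series.
set s1 := series _ n; set s2 := series _ n.
have -> : (a%:C + 'i * b%:C - ((s1)%:C + 'i * (s2)%:C))%C = ((a - s1)%:C + 'i * (b - s2)%:C)%C.
  by rewrite !rmorphB /=; ring.
apply: le_lt_trans (ler_normD _ _) _.
rewrite normC_real normrM normC_real normCE normci mul1r -rmorphD /= -(RRe_real er) ltcR.
lra.
Unshelve. all: by end_near.
Qed.

Lemma normcX {R : realType} (z : R[i]) k : Normc.normc (z ^+ k) = Normc.normc z ^+ k.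
Proof. by apply: complexI; rewrite -normCE normrX normCE rmorphXn. Qed.

Lemma gbound_cvg {R : realType} (u : nat -> (R[i])^o) (z : R[i]) :
  gbound u -> cvgn (series (fun k => u k * z ^+ k)).
Proof.
move=> gu.
set nz := Normc.normc z.
have nz0 : 0 <= nz := normc_ge0 z.
have [B hB] := gu (2 * nz + 1) ltac:(by rewrite ltr_wpDl // mulr_ge0).
apply: (@cvg_dom R _ B) => k.
rewrite Normc.normcM normcX.
apply: (@le_trans _ _ (Normc.normc (u k) * (2 * nz + 1) ^+ k * 2^-1 ^+ k)); last first.
  by rewrite ler_wpM2r // exprn_ge0 // invr_ge0 ler0n.
rewrite -mulrA ler_wpM2l ?normc_ge0 // -exprMn lerXn2r ?nnegrE ?mulr_ge0 ?invr_ge0 ?ler0n //.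
  lra. rewrite -/nz; lra.
Qed.

Fixpoint wroot {R : realType} (p : nat) : R[i] :=
  if p is p'.+1 then sqrtc (wroot p') else -1.

Lemma wroot_pow {R : realType} p : (@wroot R p) ^+ (2 ^ p) = -1.
Proof.
elim: p => [|p IH] /=; first by rewrite expr1.
by rewrite expnS exprM sqr_sqrtc IH.
Qed.

Lemma N1_neq1 {R : realType} : (-1 : R[i]) <> 1.
Proof.
move=> h; have : (1 + 1 : R[i]) == 0 by rewrite -{1}h addNr.
by have := @pnatr_eq0 R[i] 2 => /= ->.
Qed.

Lemma prim_wroot {R : realType} p : (2 ^ p.+1).-primitive_root (@wroot R p).
Proof.
have h1 : (@wroot R p) ^+ (2 ^ p.+1) = 1.
  by rewrite expnS mulnC exprM wroot_pow sqrrN expr1n.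
have [m pm dm] := prim_order_exists (expn_gt0 2 p.+1) h1.
have [e he me] := dvdn_pfactor m p.+1 (isT : prime 2) dm.
move: he; rewrite leq_eqVlt => /orP [/eqP eq1|]; first by rewrite -eq1 -me.
rewrite ltnS => he; exfalso; apply: (@N1_neq1 R).
rewrite -(wroot_pow p) -(prim_expr_mod pm).
have /eqP -> : (2 ^ p %% m == 0)%N by rewrite -/(dvdn m _) me dvdn_exp2l.
by rewrite expr0.
Qed.

Lemma sum_root {R : realType} N (w : R[i]) : N.-primitive_root w -> forall e,
  \sum_(j < N) (w ^+ e) ^+ j = if (N %| e)%N then N%:R else 0.
Proof.
move=> pw e; have N0 := prim_order_gt0 pw.
case: ifP => hd.
  have -> : w ^+ e = 1 by rewrite -(prim_expr_mod pw) (eqP hd) expr0.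
  by rewrite (eq_bigr (fun _ => 1)) ?sumr_const ?card_ord // => j _; rewrite expr1n.
have hq : w ^+ e != 1.
  by rewrite -(expr0 w) (eq_prim_root_expr pw) mod0n -/(dvdn N e) hd.
have hN : (w ^+ e) ^+ N = 1 by rewrite exprAC (prim_expr_order pw) expr1n.
have := subrX1 (w ^+ e) N; rewrite hN subrr => /esym /eqP.
by rewrite mulf_eq0 subr_eq0 (negbTE hq) /= => /eqP.
Qed.

Lemma normc_root {R : realType} N (w : R[i]) : N.-primitive_root w -> Normc.normc w = 1.
Proof.
move=> pw; have N0 := prim_order_gt0 pw.
have h : (Normc.normc w) ^+ N = 1 by rewrite -normcX (prim_expr_order pw) Normc.normc1.
by apply/eqP; rewrite -(pexpr_eq1 N0 (normc_ge0 w)) h.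
Qed.

Lemma sum_delta {R : realType} (F : nat -> R[i]) k n : (k < n)%N ->
  \sum_(0 <= l < n) (if l == k then F l else 0) = F k.
Proof.
move=> kn.
rewrite (big_cat_nat (leq0n k) (ltnW kn)) /= (big_cat_nat (leqnSn k) kn) /=.
rewrite big_nat1 eqxx big1_seq ?add0r; last first.
  by move=> i /andP [_]; rewrite mem_index_iota => /andP [_ /ltn_eqF ->].
rewrite big1_seq ?addr0 // => i /andP [_]; rewrite mem_index_iota => /andP [hi _].
by rewrite gtn_eqF.
Qed.

Lemma geom_tail {R : realType} (N L : nat) : (N <= L)%N ->
  \sum_(N <= l < L) ((2 : R)^-1) ^+ l <= 2 * (2^-1) ^+ N.
Proof.
move=> NL.
rewrite (telescope_sumr_eq (fun l => - (2 * ((2 : R)^-1) ^+ l)) _ NL); last first.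
  by move=> l _; rewrite exprS; field.
have h20 : (0 : R) <= 2^-1 by rewrite invr_ge0 ler0n.
have := exprn_ge0 L h20.
lra.
Qed.

Lemma near_fin (P : nat -> nat -> Prop) N :
  (forall j, (j < N)%N -> \forall L \near \oo%classic, P j L) ->
  \forall L \near \oo%classic, forall j, (j < N)%N -> P j L.
Proof.
elim: N => [|N IH] H.
  by apply: filterE => L j.
have h1 := IH (fun j hj => H j (ltnW (leq_trans hj (leqnn N.+1)))).
have h2 := H N (ltnSn N).
apply: filterS2 h1 h2 => L H1 H2 j; rewrite ltnS leq_eqVlt => /orP [/eqP -> //|].
exact: H1.
Qed.

Lemma dvd_small (N k l : nat) : (k < N)%N -> (l < N)%N ->
  (N %| l + (N - k))%N = (l == k).
Proof.
move=> kN lN; case: eqP => [-> | lk]; first by rewrite subnKC ?dvdnn // ltnW.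
apply/negbTE/negP => hd.
have s0 : (0 < l + (N - k))%N by rewrite addn_gt0 subn_gt0 kN orbT.
have h1 := dvdn_leq s0 hd.
have hne : (l + (N - k) != N)%N by apply/eqP => h; apply: lk; lia.
have s1 : (0 < l + (N - k) - N)%N by lia.
have := dvdn_leq s1 (dvdn_sub hd (dvdnn N)).
lia.
Qed.

Lemma cauchy3 {R : realType} (u : nat -> (R[i])^o) :
  gbound u -> (forall z : R[i], Normc.normc z <= 1 -> `|evalp u z| < 1) ->
  forall k, `|u k| <= 3.
Proof.
move=> gu hf k.
have [B hB] := gu 2 ltac:(by rewrite ltr0n).
have B0 : 0 <= B.
  by apply: le_trans (hB 0%N); rewrite mulr_ge0 ?normc_ge0 ?exprn_ge0 ?ler0n.
set p := (Num.Def.archi_bound (2 * B) + k)%N.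
set N := (2 ^ p.+1)%N.
have pN : (p < N)%N by apply: ltn_trans (ltnSn p) (ltn_expl p.+1 (isT : (1 < 2)%N)).
have kN : (k < N)%N by apply: leq_ltn_trans pN; rewrite leq_addl.
have BN : 2 * B < 2 ^+ N.
  by apply: upper_nthrootP; apply: ltnW; apply: leq_ltn_trans pN; rewrite leq_addr.
set w := @wroot R p.
have pw : N.-primitive_root w := prim_wroot p.
have N0 : (0 < N)%N := prim_order_gt0 pw.
have nwj : forall j, Normc.normc (w ^+ j) = 1.
  by move=> j; rewrite normcX (normc_root _ _ pw) expr1n.
near \oo%classic => L.
have LN : (N <= L)%N by near: L; exact: nbhs_infty_ge.
have hL : forall j, (j < N)%N ->
    `|evalp u (w ^+ j) - series (fun l => u l * (w ^+ j) ^+ l) L| < 1.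
  near: L; apply: near_fin => j _; apply: cvgr_dist_lt => //; exact: gbound_cvg.
set S := fun j => series (fun l => u l * (w ^+ j) ^+ l) L.
set T := N%:R^-1 * \sum_(j < N) w ^+ (j * (N - k)) * S j.
have hT : `|T| <= 2.
  rewrite normrM normfV normr_nat ler_pdivrMl ?ltr0n //.
  apply: le_trans (ler_norm_sum _ _ _) _.
  apply: le_trans (_ : \sum_(j < N) (2 : R[i]) <= _).
    apply: ler_sum => j _; rewrite normrM normCE nwj mul1r.
    have := hL j (ltn_ord j); rewrite -/(S j) => h.
    have := hf (w ^+ j) ltac:(by rewrite nwj).
    have := ler_normB (evalp u (w ^+ j)) (evalp u (w ^+ j) - S j).
    rewrite opprB addrC subrK => h2 h3.
    apply: le_trans h2 _; apply: le_trans (lerD (ltW h3) (ltW h)) _.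
    by rewrite (_ : 1 + 1 = 2).
  by rewrite sumr_const card_ord mulr_natl.
set d := fun l => (N%:R^-1 * \sum_(j < N) (w ^+ (l + (N - k))) ^+ j : R[i]).
have hTe : T = \sum_(0 <= l < L) u l * d l.
  rewrite /T /d /S /series /= mulr_sumr.
  rewrite (eq_bigr (fun j : 'I_N => \sum_(0 <= l < L) N%:R^-1 * (w ^+ (j * (N - k)) * (u l * (w ^+ j) ^+ l)))); last by move=> j _; rewrite !mulr_sumr.
  under [RHS]eq_bigr => l _ do rewrite mulr_sumr mulr_sumr.
  rewrite [RHS]exchange_big /=; apply: eq_bigr => j _; apply: eq_bigr => l _.
  have E : w ^+ (j * (N - k)) * (w ^+ j) ^+ l = (w ^+ (l + (N - k))) ^+ j.
    by rewrite -!exprM -exprD addnC -mulnDr mulnC.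
  rewrite -E; ring.
have hd : forall l, d l = if (N %| l + (N - k))%N then 1 else 0.
  move=> l; rewrite /d sum_root //; case: ifP => _; last by rewrite mulr0.
  by rewrite mulVf // pnatr_eq0 -lt0n.
have hsplit : T = u k + \sum_(N <= l < L) u l * d l.
  rewrite hTe (big_cat_nat (leq0n N) LN) /=; congr (_ + _).
  rewrite -(sum_delta u k N kN); apply: eq_big_nat => l /andP [_ lN].
  by rewrite hd dvd_small //; case: eqP => _; rewrite ?mulr1 ?mulr0.
have htail : `|\sum_(N <= l < L) u l * d l| <= 1.
  apply: le_trans (ler_norm_sum _ _ _) _.
  apply: le_trans (_ : \sum_(N <= l < L) ((B * (2^-1) ^+ l)%:C) <= _).
    apply: ler_sum => l _; rewrite normrM hd.
    have hu : `|u l| <= (B * 2^-1 ^+ l)%:C.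
      by rewrite normCE lecR exprVn ler_pdivlMr ?exprn_gt0 ?ltr0n //.
    case: ifP => _; rewrite ?normr1 ?normr0 ?mulr1 ?mulr0 //.
    exact: le_trans (normr_ge0 _) hu.
  rewrite -rmorph_sum -mulr_sumr /=.
  have -> : (1 : R[i]) = (1 : R)%:C by [].
  rewrite lecR.
  apply: le_trans (ler_wpM2l B0 (@geom_tail R N L LN)) _.
  rewrite exprVn mulrA ler_pdivrMr ?exprn_gt0 ?ltr0n // mul1r.
  by rewrite mulrC ltW.
have -> : u k = T - \sum_(N <= l < L) u l * d l by rewrite hsplit addrK.
apply: le_trans (ler_normB _ _) _; apply: le_trans (lerD hT htail) _.
by rewrite (natrD _ 2 1).
Unshelve. all: by end_near.
Qed.

Local Close Scope complex_scope.
Local Close Scope ring_scope.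

Lemma expn_mono m n e : (m <= n)%N -> (m ^ e <= n ^ e)%N.
Proof. by move=> h; elim: e => // e IH; rewrite !expnS leq_mul. Qed.

Lemma fact_le_pow k : (k`! <= k ^ k)%N.
Proof.
elim: k => // k IH; rewrite factS expnS leq_mul //.
by apply: leq_trans IH _; apply: expn_mono.
Qed.

Lemma fact_sq n : (n ^ n <= n`! ^ 2)%N.
Proof.
have e1 : n`! = \prod_(i < n) i.+1 by rewrite fact_prod big_add1 big_mkord.
have e2 : n`! = \prod_(i < n) (n - i)%N.
  by rewrite e1 (reindex_inj rev_ord_inj) /=; apply: eq_bigr => i _; rewrite subnSK.
rewrite expnS expn1 {1}e1 e2 -big_split /=.
have -> : (n ^ n = \prod_(i < n) n)%N by rewrite prod_nat_const card_ord.
apply: leq_prod => i _.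
have := ltn_ord i; nia.
Qed.

Lemma fact_split n k : (n`! * k`! <= (n + k)`!)%N.
Proof.
by rewrite -(bin_fact (leq_addr k n)) addKn leq_pmull // bin_gt0 leq_addr.
Qed.

Lemma nat_ineq q n k m : (0 < q)%N -> (k < q * n.+1)%N -> (2 * q + 6 <= n)%N ->
  (8 * q + 1 <= m)%N -> (3 ^ m * (k`!) ^ m < ((n + k)`!) ^ m.-1)%N.
Proof.
move=> q0 kq nq mq.
set F := n`!; set K := k`!.
have K0 : (0 < K)%N := fact_gt0 k.
have n3 : (3 <= n)%N by lia.
have F3 : (3 <= F)%N.
  by have := @ltn_fact 2 n isT n3.
have key : (3 ^ (8 * q + 1) * K < F ^ (8 * q))%N.
  set M := (q * n.+1)%N.
  have hK : (K <= n ^ (2 * M))%N.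
    apply: leq_trans (fact_le_pow k) _.
    apply: (@leq_trans (M ^ k)); first by apply: expn_mono; lia.
    apply: (@leq_trans (M ^ M)); first by apply: leq_pexp2l; lia.
    rewrite expnM; apply: expn_mono; rewrite /M; nia.
  have h3 : (3 ^ (8 * q + 1) <= n ^ (8 * q + 1))%N by apply: expn_mono.
  have hF : (n ^ (4 * q * n) <= F ^ (8 * q))%N.
    have e1 : (n ^ (4 * q * n) = (n ^ n) ^ (4 * q))%N by rewrite -expnM mulnC.
    have e2 : (F ^ (8 * q) = (F ^ 2) ^ (4 * q))%N.
      by rewrite -expnM; congr (expn _ _); lia.
    rewrite e1 e2; apply: expn_mono.
    exact: fact_sq.
  apply: leq_ltn_trans (leq_mul h3 hK) _; rewrite -expnD.
  apply: leq_trans hF; rewrite ltn_exp2l; [nia | lia].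
have [t ht] : exists t, m = (8 * q + t).+1 by exists (m - (8 * q).+1); lia.
rewrite ht /=; set s := (8 * q + t)%N.
apply: (@leq_trans ((F * K) ^ s)); last by apply: expn_mono; exact: fact_split.
have e1 : (3 ^ s.+1 * K ^ s.+1 = (3 ^ (8 * q + 1) * K) * (3 ^ t * K ^ s))%N.
  have e0 : (3 ^ s.+1 = 3 ^ (8 * q + 1) * 3 ^ t)%N.
    by rewrite -expnD; congr (expn _ _); rewrite /s; lia.
  by rewrite e0 (expnS K) mulnACA.
have e2 : ((F * K) ^ s = F ^ (8 * q) * (F ^ t * K ^ s))%N.
  by rewrite /s expnMn expnD mulnA.
rewrite e1 e2.
apply: (@leq_trans (F ^ (8 * q) * (3 ^ t * K ^ s))).
  apply: leq_trans (leq_mul key (leqnn _)).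
  have X0 : (0 < 3 ^ t * K ^ s)%N by rewrite muln_gt0 !expn_gt0 K0.
  by rewrite mulSn; lia.
rewrite leq_mul2l leq_mul2r; apply/orP; right; apply/orP; right.
by apply: expn_mono.
Qed.

Local Open Scope ring_scope.
Local Open Scope complex_scope.

Lemma evalp_zero {R : realType} (z : R[i]) : evalp (fun _ => (0 : (R[i])^o)) z = 0.
Proof.
rewrite /evalp; apply: lim_near_cst; first exact: norm_hausdorff.
near=> N; rewrite /series /= big1 // => i _; rewrite mul0r.
Unshelve. all: by end_near.
Qed.

Lemma gbound_iter {R : realType} (x : nat -> (R[i])^o) n : gbound x -> gbound (iter n (@Dop R) x).
Proof. by move=> gx; elim: n => // n IH; rewrite iterS; apply: gbound_D. Qed.

Lemma sub0_lt {R : realType} (a b : (R[i])^o) (e : R[i]) : b = 0 -> `|a - b| < e -> `|a| < e.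
Proof. by move=> ->; rewrite subr0. Qed.

Lemma visit_bound {R : realType} (x : nat -> (R[i])^o) n : entire x ->
  visits x (fun _ => 0) 1 1 n ->
  forall k, `|x (n + k)%N| * ((n + k)`!)%:R <= 3 * (k`!)%:R.
Proof.
move=> ex hv k.
have gi := gbound_iter x n (entire_gbound x ex).
have h3 := cauchy3 _ gi.
have hk : `|iter n (@Dop R) x k| <= 3.
  apply: h3 => z hz.
  have hz' : `|z| <= (1 : R)%:C by rewrite normCE lecR.
  exact: (sub0_lt _ _ _ (evalp_zero z) (hv z hz')).
have := iterD_fact x n k.
move/(congr1 (fun v => `|v|)) => e.
rewrite mulr_natr -normrMn -e normrMn -(mulr_natr (`|_|)) ler_wpM2r //.
Qed.

Lemma sum_lt (m L : nat) : (\sum_(n < m) ((n < L)%N : nat) = minn m L)%N.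
Proof.
elim: m => [|m IH]; first by rewrite big_ord0 min0n.
rewrite big_ord_recr /= IH; case: (ltnP m L) => /= h; lia.
Qed.

Lemma dens_gap {R : realType} (A : nat -> Prop) : @pos_lower_density R A ->
  exists q N0, (0 < q)%N /\ forall j, (N0 <= j)%N ->
    exists n, A n /\ (j.+1 %/ q <= n)%N /\ (n <= j)%N.
Proof.
case=> c [c0 [N0 hN]].
set q := Num.Def.archi_bound c^-1.
have hq : c^-1 < q%:R.
  by apply: archi_boundP; rewrite invr_ge0 ltW.
have q0' : (0 : R) < q%:R by apply: lt_trans hq; rewrite invr_gt0.
have q0 : (0 < q)%N by rewrite -(ltr0n R).
have hqc : q%:R^-1 < c.
  rewrite -[q%:R^-1]mul1r ltr_pdivrMr // mulrC.
  by move: hq; rewrite -[c^-1]mul1r ltr_pdivrMr.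
exists q, N0; split => // j hj.
case: (pselect (exists n, A n /\ (j.+1 %/ q <= n)%N /\ (n <= j)%N)) => // hno; exfalso.
set L := (j.+1 %/ q)%N.
have hsum : \sum_(n < j.+1) ((`[< A n >] : nat)%:R : R) <= L%:R.
  apply: (@le_trans _ _ (\sum_(n < j.+1) (((n < L)%N : nat)%:R : R))).
    apply: ler_sum => n _; rewrite ler_nat; case: (asboolP (A n)) => An //=.
    case: (ltnP n L) => // Ln; exfalso; apply: hno; exists n; split => //; split => //.
    by rewrite -ltnS.
  by rewrite -natr_sum ler_nat sum_lt geq_minr.
have := hN j hj.
have hj0 : (0 : R) <= j.+1%:R^-1 by rewrite invr_ge0 ler0n.
move=> /le_trans /(_ (ler_wpM2r hj0 hsum)) hc.
have : (L%:R / j.+1%:R : R) <= q%:R^-1.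
  rewrite ler_pdivrMr ?ltr0n // mulrC ler_pdivlMr //.
  by rewrite -natrM ler_nat leq_trunc_div.
move=> h; have := le_lt_trans (le_trans hc h) hqc; rewrite ltxx //.
Qed.

Lemma gbound_entire {R : realType} (u : nat -> (R[i])^o) : gbound u -> entire u.
Proof. by move=> g z; apply: gbound_cvg. Qed.

Lemma gbound_zero {R : realType} : gbound (fun _ : nat => (0 : (R[i])^o)).
Proof.
move=> rho _; exists 0 => l; rewrite (_ : Normc.normc _ = 0) ?mul0r //.
exact: Normc.normc0.
Qed.

Lemma gbound_cst0 {R : realType} (w : R[i]) :
  gbound (fun k : nat => (if k == 0%N then w else 0 : (R[i])^o)).
Proof.
move=> rho rho0; exists (Normc.normc w) => -[|l] /=; first by rewrite expr0 mulr1.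
by rewrite expr0n /= addr0 sqrtr0 mul0r normc_ge0.
Qed.

Lemma fhc_hc {R : realType} (x : nat -> (R[i])^o) : freq_hypercyclic x -> hypercyclic x.
Proof.
move=> fx y ey r eps r0 e0; have [c [c0 [N0 hN]]] := fx y ey r eps r0 e0.
case: (pselect (exists n, visits x y r eps n)) => // hno; exfalso.
have := hN N0 (leqnn N0).
rewrite big1 ?mul0r => [|n _]; last by rewrite asboolF //= => h; apply: hno; exists n.
by rewrite leNgt c0.
Qed.

Lemma dist0 {R : realType} (u v : nat -> (R[i])^o) (e : R[i]) :
  `|evalp u 0 - evalp v 0| < e -> `|u 0%N - v 0%N| < e.
Proof. by rewrite !evalp0. Qed.

Lemma part1 {R : realType} (x : nat -> (R[i])^o) : entire x -> freq_hypercyclic x ->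
  exists M : nat, forall m : nat, (M <= m)%N -> ~ hypercyclic (hpow x m).
Proof.
move=> ex fx.
have := fx (fun _ => 0) (gbound_entire _ gbound_zero) 1 1 ltr01 ltr01.
move=> /dens_gap [q [N0 [q0 hgap]]].
exists (8 * q + 1)%N => m hm hhc.
set J := (N0 + q * (2 * q + 7))%N.
set b := fun i => (x i ^+ m *+ i`! : (R[i])^o).
set s := \sum_(i < J) Normc.normc (b i).
have s0 : 0 <= s by apply: sumr_ge0 => i _; exact: normc_ge0.
set w := ((2 + s)%:C : R[i]).
have ey := gbound_entire _ (gbound_cst0 w).
have [n hn] := hhc _ ey 1 1 ltr01 ltr01.
have h0 := dist0 _ _ _ (hn 0 ltac:(by rewrite normr0 ler0c)).
have eb : iter n (@Dop R) (hpow x m) 0%N = b n.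
  by have := iterD_fact (hpow x m) n 0; rewrite mulr1n addn0.
rewrite eb /= in h0.
have hb : Normc.normc (b n - w) < 1 by rewrite -ltcR -normCE.
have nw : Normc.normc w = 2 + s.
  by apply: complexI; rewrite -normCE normC_real ger0_norm // addr_ge0.
have tri : Normc.normc w <= Normc.normc (b n - w) + Normc.normc (b n).
  have e : Normc.normc (b n - w) = Normc.normc (w - b n) by rewrite -[w - b n]opprB normcN.
  by rewrite e; have := le_normcD (w - b n) (b n); rewrite subrK.
have nJ : (J <= n)%N.
  rewrite leqNgt; apply/negP => nJ.
  have : Normc.normc (b n) <= s.
    rewrite /s (bigD1 (Ordinal nJ)) //= lerDl.
    by apply: sumr_ge0 => i _; exact: normc_ge0.
  lra.
have hbig : 1 < Normc.normc (b n) by lra.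
have [n' [An' [hn1 hn2]]] := hgap n (leq_trans (leq_addr _ _) nJ).
set k := (n - n')%N.
have hnk : n = (n' + k)%N by rewrite subnKC.
have vb := visit_bound x n' ex An' k; rewrite -hnk in vb.
have kq : (k < q * n'.+1)%N.
  have := ltn_ceil n.+1 q0; have := leq_mul (hn1 : (n.+1 %/ q).+1 <= n'.+1)%N (leqnn q).
  rewrite /k; nia.
have nq : (2 * q + 6 <= n')%N.
  apply: leq_trans hn1; rewrite leq_divRL //; rewrite /J in nJ; nia.
have hineq := nat_ineq q n' k m q0 kq nq hm; rewrite -hnk in hineq.
have e : `|b n| = `|x n| ^+ m * (n`!)%:R by rewrite /b normrMn normrX mulr_natr.
have hb1 : (1 : R[i]) < `|b n| by rewrite normCE -[1]/((1 : R)%:C) ltcR.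
have hx : (`|x n| * n`!%:R) ^+ m <= (3 * k`!%:R) ^+ m.
  by apply: lerXn2r; rewrite ?nnegrE ?mulr_ge0 ?ler0n.
rewrite !exprMn in hx.
have hnat : ((3 : R[i]) ^+ m * (k`!%:R) ^+ m) < (n`!%:R) ^+ m.-1.
  by rewrite -!natrX -natrM ltr_nat.
have m1 : m = m.-1.+1 by lia.
have P0 : (0 : R[i]) < (n`!%:R) ^+ m.-1 by rewrite exprn_gt0 // ltr0n fact_gt0.
have : `|b n| * (n`!%:R) ^+ m.-1 < 1 * (n`!%:R) ^+ m.-1.
  rewrite mul1r e -mulrA -exprS -m1; exact: le_lt_trans hx hnat.
by rewrite ltr_pM2r // => /(lt_trans hb1); rewrite ltxx.
Qed.

Theorem proposition3p1 (R : realType) :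
  (forall x : nat -> R[i], entire x -> freq_hypercyclic x ->
     exists M : nat, forall m : nat, (M <= m)%N -> ~ hypercyclic (hpow x m))
  /\ ~ (exists S : set (nat -> R[i]), freq_hypercyclic_algebra S).
Proof.
split; first by move=> x; exact: part1.
move=> [S [Sent [S0 [Sadd [Sscal [Smul [[x [Sx xnz]] Sfhc]]]]]]].
have [M hM] := part1 x (Sent x Sx) (Sfhc x Sx xnz).
have Spow : forall m, S (hpow x m.+1).
  elim=> [|m IH].
    have -> : hpow x 1 = x by apply/funext => k; rewrite /hpow expr1.
    exact: Sx.
  have -> : hpow x m.+2 = (fun k => x k * hpow x m.+1 k).
    by apply/funext => k; rewrite /hpow exprS.
  exact: Smul.
have nz : hpow x M.+1 <> (fun _ => 0).
  move=> h; apply: xnz; apply/funext => k.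
  have := congr1 (fun f => f k) h; rewrite /hpow /= => /eqP.
  by rewrite expf_eq0 /= => /eqP.
apply: (hM M.+1 (leqnSn M)); apply: fhc_hc; exact: Sfhc _ (Spow M) nz.
Qed.
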